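(* Let $\pi(m)=(1/2)^m$ for $m\in\mathbb{N}^+$ (and $0$ otherwise), and let the proposal be $q(m,\{m+1\})=\theta=1-q(m,\{m-1\})$ for $m\in\mathbb{Z}$, $\theta\in(0,1)$. For $m\in\mathbb{N}^+$ and $N\in\mathbb{N}^+$ let the weights be $$W_{m,N}=\frac{b_m-\varepsilon_m}{N}\,\mathrm{Bin}(N,s_m)+\varepsilon_m,$$ where $b_m>1$, $\varepsilon_m\in(0,1]$, $\mathrm{Bin}(N,s)$ is a binomial random variable with parameters $N$ and $s$, and $s_m=\frac{1-\varepsilon_m}{b_m-\varepsilon_m}$ so that $\mathbb{E}[W_{m,N}]=1$. Suppose $b_m\to\infty$, $\varepsilon_m\to0$ as $m\to\infty$ and $\lim_{m\to\infty}\frac{\varepsilon_{m-1}}{\varepsilon_m}=l$ with $l\in\mathbb{R}^+\cup\{+\infty\}$. Then for every $N\in\mathbb{N}^+$ the chain generated by the noisy kernel $\tilde P_N$ is geometrically ergodic.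
   Context: Noisy Metropolis–Hastings kernel $\tilde P_N$: from state $m$, propose $Y\sim q(m,\cdot)$, draw independent weights $W\sim Q_{m,N}$, $U\sim Q_{Y,N}$ (the laws of $W_{m,N}$, $W_{Y,N}$), and move to $Y$ with probability $\min\{1,\frac{\pi(Y)q(Y,m)}{\pi(m)q(m,Y)}\cdot\frac{U}{W}\}$, otherwise stay at $m$ (proposals outside $\mathbb{N}^+$ are rejected). A $\varphi$-irreducible aperiodic chain with kernel $K$ is geometrically ergodic if it has an invariant probability distribution $\mu$ and there exist finite $V\ge1$, $\tau<1$, $R<\infty$ with $\|K^n(x,\cdot)-\mu\|_{TV}\le RV(x)\tau^n$ for all $x,n$. *)

(* Defs.v *)
From Stdlib Require Import Reals Arith.
From Stdlib Require Binomial.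
From Coquelicot Require Import Coquelicot.
Open Scope R_scope.

Definition binomR (N k : nat) : R := Binomial.C N k.

Fixpoint kpow (K : nat -> nat -> R) (n : nat) (x y : nat) : R :=
  match n with
  | O => if Nat.eqb x y then 1 else 0
  | S n' => Series (fun z => kpow K n' x z * K z y)
  end.

(* phi-irreducible (phi a nonzero measure on nat, given by its point masses;
   phi(A)>0 implies L(x,A) > 0 for all x, with first-hitting times n >= 1),
   aperiodic (the states charged by phi, which all communicate, have period 1),
   with an invariant probability mu and geometric convergence in total variation:
   sup_A |K^n(x,A) - mu(A)| <= R V(x) tau^n. *)
Definition geometrically_ergodic (K : nat -> nat -> R) : Prop :=
  exists phi : nat -> R,
    (forall y, 0 <= phi y) /\ (exists y, 0 < phi y) /\
    (forall x y, 0 < phi y -> exists n, (1 <= n)%nat /\ 0 < kpow K n x y) /\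
    (forall y, 0 < phi y -> forall d : nat, (2 <= d)%nat ->
        exists n, (1 <= n)%nat /\ 0 < kpow K n y y /\ Nat.modulo n d <> 0%nat) /\
  exists mu : nat -> R,
    (forall y, 0 <= mu y) /\ is_series mu 1 /\
    (forall y, is_series (fun x => mu x * K x y) (mu y)) /\
  exists (V : nat -> R) (tau Rc : R),
    (forall x, 1 <= V x) /\ 0 <= tau /\ tau < 1 /\
    forall (x n : nat) (A : nat -> bool),
      Rabs (Series (fun y => if A y then kpow K n x y - mu y else 0))
        <= Rc * V x * tau ^ n.

Definition pi_target (m : nat) : R := if Nat.leb 1 m then (1/2) ^ m else 0.

Definition qprop (theta : R) (m y : nat) : R :=
  if Nat.eqb y (S m) then theta
  else if Nat.eqb m (S y) then 1 - theta else 0.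

Definition s_par (b eps : nat -> R) (m : nat) : R := (1 - eps m) / (b m - eps m).

(* W_{m,N} = (b_m - eps_m)/N * Bin(N, s_m) + eps_m : value when Bin(N,s_m) = k ... *)
Definition wval (b eps : nat -> R) (N m k : nat) : R :=
  (b m - eps m) / INR N * INR k + eps m.

(* ... and the probability P(Bin(N, s_m) = k) *)
Definition wprob (b eps : nat -> R) (N m k : nat) : R :=
  binomR N k * s_par b eps m ^ k * (1 - s_par b eps m) ^ (N - k).

(* acceptance probability of a move m -> y:
   E[ min{1, pi(y) q(y,m) / (pi(m) q(m,y)) * U / W} ],
   W ~ Q_{m,N}, U ~ Q_{y,N} independent *)
Definition accept (theta : R) (b eps : nat -> R) (N m y : nat) : R :=
  sum_f_R0 (fun k =>
    sum_f_R0 (fun j =>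
      wprob b eps N m k * wprob b eps N y j *
      Rmin 1 (pi_target y * qprop theta y m / (pi_target m * qprop theta m y)
              * (wval b eps N y j / wval b eps N m k))) N) N.

(* noisy MH kernel on N^+ (m, y >= 1); proposals to 0 are rejected *)
Definition noisy_kernel_orig (theta : R) (b eps : nat -> R) (N m y : nat) : R :=
  let up := qprop theta m (S m) * accept theta b eps N m (S m) in
  let down := if Nat.leb 2 m
              then qprop theta m (pred m) * accept theta b eps N m (pred m)
              else 0 in
  if Nat.eqb y (S m) then up
  else if andb (Nat.leb 2 m) (Nat.eqb y (pred m)) then down
  else if Nat.eqb y m then 1 - up - down
  else 0.

(* the same kernel transported to nat: state x : nat stands for m = x + 1 *)
Definition noisy_kernel (theta : R) (b eps : nat -> R) (N : nat) (x y : nat) : R :=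
  noisy_kernel_orig theta b eps N (S x) (S y).

(* Main.v *)
Require Import Defs.
From Stdlib Require Import Reals Arith Lra Lia.
From Coquelicot Require Import Coquelicot.
Open Scope R_scope.


Lemma series_of_lim (a : nat -> R) (l : R) :
  is_lim_seq (fun n => sum_f_R0 a n) l -> is_series a l.
Proof.
  intros H. unfold is_series.
  apply (filterlim_ext (fun n => sum_f_R0 a n)).
  - intros n. now rewrite sum_n_Reals.
  - exact H.
Qed.

Lemma lim_of_series (a : nat -> R) (l : R) :
  is_series a l -> is_lim_seq (fun n => sum_f_R0 a n) l.
Proof.
  intros H. unfold is_series in H.
  apply (filterlim_ext (sum_n a)).
  - intros n. now rewrite sum_n_Reals.
  - exact H.
Qed.

Lemma sum_zero_upto (u : nat -> R) (n : nat) :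
  (forall k, (k <= n)%nat -> u k = 0) -> sum_f_R0 u n = 0.
Proof.
  induction n; intros H; simpl.
  - apply H; lia.
  - rewrite IHn by (intros; apply H; lia). rewrite H by lia. ring.
Qed.

Lemma is_series_finite (u : nat -> R) (M : nat) :
  (forall k, (M < k)%nat -> u k = 0) -> is_series u (sum_f_R0 u M).
Proof.
  intros H. apply series_of_lim.
  apply is_lim_seq_ext_loc with (fun _ => sum_f_R0 u M).
  - exists M. intros n Hn. induction n.
    + assert (M = 0%nat) by lia. subst. reflexivity.
    + destruct (Nat.eq_dec M (S n)) as [E|E].
      * subst. reflexivity.
      * simpl. rewrite <- IHn by lia. rewrite H by lia. ring.
  - apply is_lim_seq_const.
Qed.

Lemma sum_nonneg (u : nat -> R) (n : nat) :
  (forall k, 0 <= u k) -> 0 <= sum_f_R0 u n.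
Proof. intros H; induction n; simpl; [apply H|]. specialize (H (S n)); lra. Qed.

Lemma sum_pos (u : nat -> R) (n : nat) :
  (forall k, 0 <= u k) -> 0 < u 0%nat -> 0 < sum_f_R0 u n.
Proof. intros H H0; induction n; simpl; [auto|]. specialize (H (S n)); lra. Qed.

Lemma sum_le (u v : nat -> R) (n : nat) :
  (forall k, u k <= v k) -> sum_f_R0 u n <= sum_f_R0 v n.
Proof. intros H; induction n; simpl; [apply H|]. specialize (H (S n)); lra. Qed.

Lemma sum_only0 (u : nat -> R) (n : nat) :
  (forall k, (1 <= k)%nat -> u k = 0) -> sum_f_R0 u n = u 0%nat.
Proof. intros H; induction n; simpl; [auto|]. rewrite IHn, (H (S n)) by lia. ring. Qed.

Lemma lim_sum (f : nat -> nat -> R) (L : nat -> R) (N : nat) :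
  (forall k, is_lim_seq (fun x => f x k) (L k)) ->
  is_lim_seq (fun x => sum_f_R0 (f x) N) (sum_f_R0 L N).
Proof.
  intros H; induction N; simpl.
  - apply H.
  - apply is_lim_seq_plus'; auto.
Qed.

Lemma lim_pow (u : nat -> R) (l : R) (k : nat) :
  is_lim_seq u l -> is_lim_seq (fun x => u x ^ k) (l ^ k).
Proof.
  intros H; induction k; simpl.
  - apply is_lim_seq_const.
  - apply is_lim_seq_mult'; auto.
Qed.

Lemma Rmin_abs (x y : R) : Rmin x y = (x + y - Rabs (x - y)) / 2.
Proof. unfold Rmin; destruct (Rle_dec x y); [rewrite Rabs_left1|rewrite Rabs_right]; lra. Qed.
Lemma Rmax_abs (x y : R) : Rmax x y = (x + y + Rabs (x - y)) / 2.
Proof. unfold Rmax; destruct (Rle_dec x y); [rewrite Rabs_left1|rewrite Rabs_right]; lra. Qed.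

Lemma lim_Rmin1 (u : nat -> R) (l : R) :
  is_lim_seq u l -> is_lim_seq (fun x => Rmin 1 (u x)) (Rmin 1 l).
Proof.
  intros H. rewrite Rmin_abs.
  apply is_lim_seq_ext with (fun x => (1 + u x - Rabs (1 - u x)) * /2).
  { intros; rewrite Rmin_abs; reflexivity. }
  apply is_lim_seq_mult'; [|apply is_lim_seq_const].
  apply is_lim_seq_minus'. apply is_lim_seq_plus'; [apply is_lim_seq_const|exact H].
  apply (is_lim_seq_abs (fun x => 1 - u x) (1 - l)).
  apply is_lim_seq_minus'; [apply is_lim_seq_const|exact H].
Qed.

Lemma lim_Rmax1 (u : nat -> R) (l : R) :
  is_lim_seq u l -> is_lim_seq (fun x => Rmax 1 (u x)) (Rmax 1 l).
Proof.
  intros H. rewrite Rmax_abs.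
  apply is_lim_seq_ext with (fun x => (1 + u x + Rabs (1 - u x)) * /2).
  { intros; rewrite Rmax_abs; reflexivity. }
  apply is_lim_seq_mult'; [|apply is_lim_seq_const].
  apply is_lim_seq_plus'. apply is_lim_seq_plus'; [apply is_lim_seq_const|exact H].
  apply (is_lim_seq_abs (fun x => 1 - u x) (1 - l)).
  apply is_lim_seq_minus'; [apply is_lim_seq_const|exact H].
Qed.

Lemma fin_max (f : nat -> R) (n : nat) : exists M, forall z, (z <= n)%nat -> f z <= M.
Proof.
  induction n.
  - exists (f 0%nat); intros z Hz; replace z with 0%nat by lia; lra.
  - destruct IHn as [M HM]. exists (Rmax M (f (S n))). intros z Hz.
    destruct (Nat.eq_dec z (S n)); [subst; apply Rmax_r|].
    eapply Rle_trans; [apply HM; lia|apply Rmax_l].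
Qed.

Lemma fin_min (f : nat -> R) (n : nat) : (forall z, 0 < f z) ->
  exists m, 0 < m /\ forall z, (z <= n)%nat -> m <= f z.
Proof.
  intros Hp; induction n.
  - exists (f 0%nat); split; auto; intros z Hz; replace z with 0%nat by lia; lra.
  - destruct IHn as [m [Hm HM]]. exists (Rmin m (f (S n))). split.
    { apply Rmin_glb_lt; auto. }
    intros z Hz.
    destruct (Nat.eq_dec z (S n)); [subst; apply Rmin_r|].
    eapply Rle_trans; [apply Rmin_l|apply HM; lia].
Qed.

Lemma ex_series_lim (a : nat -> R) : ex_series a -> is_lim_seq (fun n => sum_f_R0 a n) (Series a).
Proof. intros H. apply lim_of_series. apply Series_correct. exact H. Qed.

Lemma psum_le_series (a : nat -> R) (n : nat) :
  (forall k, 0 <= a k) -> ex_series a -> sum_f_R0 a n <= Series a.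
Proof.
  intros Hp He. pose proof (ex_series_lim a He) as L.
  apply (is_lim_seq_incr_n _ n) in L.
  assert (R : Rbar_le (sum_f_R0 a n) (Series a)).
  { apply (is_lim_seq_le (fun _ => sum_f_R0 a n) (fun k => sum_f_R0 a (k + n)) _ _); auto.
    2: apply is_lim_seq_const.
    intros k. induction k; simpl; [lra|]. specialize (Hp (S (k + n))). lra. }
  exact R.
Qed.

Lemma series_le_bound (a : nat -> R) (M : R) :
  ex_series a -> (forall n, sum_f_R0 a n <= M) -> Series a <= M.
Proof.
  intros He Hb. pose proof (ex_series_lim a He) as L.
  assert (R : Rbar_le (Series a) M).
  { apply (is_lim_seq_le _ (fun _ => M) _ _ Hb L). apply is_lim_seq_const. }
  exact R.
Qed.

Lemma ex_series_bounded (a : nat -> R) (M : R) :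
  (forall k, 0 <= a k) -> (forall n, sum_f_R0 a n <= M) -> ex_series a.
Proof.
  intros Hp Hb.
  assert (E : ex_finite_lim_seq (fun n => sum_f_R0 a n)).
  { apply ex_finite_lim_seq_incr with M; auto. intros n; simpl. specialize (Hp (S n)); lra. }
  destruct E as [l Hl]. exists l. apply series_of_lim. exact Hl.
Qed.


Definition Hm (H : nat -> R) (y : nat) : R := match y with O => 0 | S y' => H y' end.
Definition Mg (a dd g : nat -> R) (z : nat) : R :=
  a (S z) * g (S z) + (1 - a z - dd z) * g z + match z with O => 0 | S z' => dd z' * g z' end.

Lemma contract (a dd g H H' : nat -> R) (rho : R) :
  (forall z, 0 <= a z) -> (forall z, 0 <= dd z) -> (forall z, 0 <= 1 - a z - dd z) ->
  (forall z, 0 < g z) -> (forall z, Mg a dd g z <= rho * g z) ->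
  (forall y, H' y = (1 - a y - dd y) * H y + a y * Hm H y + dd y * H (S y)) ->
  forall Y, sum_f_R0 (fun y => g y * Rabs (H' y)) Y <=
            rho * sum_f_R0 (fun z => g z * Rabs (H z)) (S Y).
Proof.
  intros Ha Hd Hc Hg HM HH Y.
  set (T := fun y => g y * ((1 - a y - dd y) * Rabs (H y) + a y * Rabs (Hm H y) + dd y * Rabs (H (S y)))).
  assert (S1 : sum_f_R0 (fun y => g y * Rabs (H' y)) Y <= sum_f_R0 T Y).
  { apply sum_le. intros y. unfold T. rewrite HH.
    apply Rmult_le_compat_l; [left; apply Hg|].
    eapply Rle_trans; [apply Rabs_triang|].
    eapply Rle_trans; [apply Rplus_le_compat_r; apply Rabs_triang|].
    rewrite !Rabs_mult, (Rabs_pos_eq (1 - a y - dd y)), (Rabs_pos_eq (a y)), (Rabs_pos_eq (dd y)); auto; lra. }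
  assert (S2 : forall Y, sum_f_R0 T Y = sum_f_R0 (fun z => Rabs (H z) * Mg a dd g z) Y
                 - g (S Y) * a (S Y) * Rabs (H Y) + g Y * dd Y * Rabs (H (S Y))).
  { induction Y0; simpl.
    - unfold T, Mg; simpl. rewrite Rabs_R0. ring.
    - rewrite IHY0. unfold T, Mg; simpl. ring. }
  eapply Rle_trans; [exact S1|]. rewrite S2.
  assert (E1 : sum_f_R0 (fun z => Rabs (H z) * Mg a dd g z) Y <= sum_f_R0 (fun z => rho * (g z * Rabs (H z))) Y).
  { apply sum_le; intros z. specialize (HM z). pose proof (Rabs_pos (H z)). nra. }
  assert (E2 : g Y * dd Y <= rho * g (S Y)).
  { specialize (HM (S Y)). unfold Mg in HM. simpl in HM.
    pose proof (Ha (S (S Y))). pose proof (Hg (S (S Y))). pose proof (Hc (S Y)). pose proof (Hg (S Y)). nra. }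
  assert (E3 : 0 <= g (S Y) * a (S Y) * Rabs (H Y)).
  { pose proof (Hg (S Y)); pose proof (Ha (S Y)); pose proof (Rabs_pos (H Y)).
    apply Rmult_le_pos; [nra|auto]. }
  assert (E4 : g Y * dd Y * Rabs (H (S Y)) <= rho * g (S Y) * Rabs (H (S Y))).
  { apply Rmult_le_compat_r; [apply Rabs_pos|lra]. }
  simpl. 
  replace (sum_f_R0 (fun z => rho * (g z * Rabs (H z))) Y) with (rho * sum_f_R0 (fun z => g z * Rabs (H z)) Y) in E1.
  2:{ rewrite scal_sum. apply sum_eq; intros; ring. }
  nra.
Qed.


Definition sK (up dn : nat -> R) (y : nat) : R :=
  1 - up y - match y with O => 0 | S y' => dn y' end.
Definition Kcomb (up dn : nat -> R) (u : nat -> R) (y : nat) : R :=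
  match y with O => 0 | S y' => u y' * up y' end + u y * sK up dn y + u (S y) * dn y.

Lemma Hupdate (up dn h : nat -> R) (y : nat) :
  sum_f_R0 (Kcomb up dn h) y =
  (1 - up y - dn y) * sum_f_R0 h y + up y * Hm (sum_f_R0 h) y + dn y * sum_f_R0 h (S y).
Proof.
  assert (E : forall y, sum_f_R0 (Kcomb up dn h) y = sum_f_R0 h y - up y * h y + dn y * h (S y)).
  { induction y0; simpl.
    - unfold Kcomb, sK. simpl. ring.
    - rewrite IHy0. unfold Kcomb, sK. ring. }
  rewrite E. destruct y; simpl; ring.
Qed.

Lemma h_le_H (h : nat -> R) (Y : nat) :
  sum_f_R0 (fun y => Rabs (h y)) Y <= 2 * sum_f_R0 (fun y => Rabs (sum_f_R0 h y)) Y.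
Proof.
  assert (G : forall Y, sum_f_R0 (fun y => Rabs (h y)) Y + Rabs (sum_f_R0 h Y)
     <= 2 * sum_f_R0 (fun y => Rabs (sum_f_R0 h y)) Y).
  { induction Y0; simpl. lra.
    pose proof (Rabs_triang (sum_f_R0 h Y0 + h (S Y0)) (- sum_f_R0 h Y0)).
    replace (sum_f_R0 h Y0 + h (S Y0) + - sum_f_R0 h Y0) with (h (S Y0)) in H by ring.
    rewrite Rabs_Ropp in H. lra. }
  specialize (G Y). pose proof (Rabs_pos (sum_f_R0 h Y)). lra.
Qed.


Lemma sum_last (u : nat -> R) (n : nat) :
  (forall k, (k < n)%nat -> u k = 0) -> sum_f_R0 u n = u n.
Proof.
  intros H. destruct n; simpl; auto.
  rewrite sum_zero_upto; [ring|]. intros; apply H; lia.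
Qed.

Section BD.
Variable K : nat -> nat -> R.
Variables up dn : nat -> R.
Variable theta : R.
Hypothesis Hth : 0 < theta < 1.
Hypothesis K_up : forall x, K x (S x) = up x.
Hypothesis K_dn : forall y, K (S y) y = dn y.
Hypothesis K_st : forall x, K x x = sK up dn x.
Hypothesis K_0 : forall x y, y <> S x -> x <> S y -> x <> y -> K x y = 0.
Hypothesis up_b : forall x, 0 < up x <= theta.
Hypothesis dn_b : forall x, 0 < dn x <= 1 - theta.

Lemma sK_nonneg y : 0 <= sK up dn y.
Proof. unfold sK. destruct y as [|y]; [pose proof (up_b 0); lra|]. pose proof (dn_b y); pose proof (up_b (S y)); lra. Qed.
Lemma sK0_pos : 0 < sK up dn 0.
Proof. unfold sK. pose proof (up_b 0). lra. Qed.

Lemma series_K (u : nat -> R) (y : nat) :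
  is_series (fun z => u z * K z y) (Kcomb up dn u y).
Proof.
  replace (Kcomb up dn u y) with (sum_f_R0 (fun z => u z * K z y) (S y)).
  - apply is_series_finite. intros k Hk. rewrite K_0 by lia. ring.
  - destruct y as [|y].
    + simpl. rewrite K_st, K_dn. unfold Kcomb. ring.
    + rewrite tech5, tech5. rewrite sum_last.
      * rewrite K_up, K_st, K_dn. unfold Kcomb. ring.
      * intros k Hk. rewrite K_0 by lia. ring.
Qed.

Lemma kpow_S n x y : kpow K (S n) x y = Kcomb up dn (kpow K n x) y.
Proof. simpl. apply is_series_unique. apply series_K. Qed.

Lemma Kcomb_nonneg u y : (forall z, 0 <= u z) -> 0 <= Kcomb up dn u y.
Proof.
  intros Hu. unfold Kcomb. pose proof (sK_nonneg y). pose proof (dn_b y).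
  pose proof (Hu y). pose proof (Hu (S y)).
  assert (0 <= match y with O => 0 | S y' => u y' * up y' end).
  { destruct y; [lra|]. pose proof (Hu y); pose proof (up_b y). nra. }
  nra.
Qed.

Lemma kpow_nonneg n x y : 0 <= kpow K n x y.
Proof.
  revert y; induction n; intros y.
  - simpl. destruct (Nat.eqb x y); lra.
  - rewrite kpow_S. apply Kcomb_nonneg. auto.
Qed.

Lemma kpow_reach x : forall n, (n <= x)%nat -> 0 < kpow K n x (x - n).
Proof.
  induction n; intros Hn.
  - simpl. rewrite Nat.sub_0_r, Nat.eqb_refl. lra.
  - rewrite kpow_S. specialize (IHn ltac:(lia)).
    replace (x - n)%nat with (S (x - S n)) in IHn by lia.
    unfold Kcomb.
    pose proof (kpow_nonneg n x (x - S n)). pose proof (sK_nonneg (x - S n)).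
    pose proof (dn_b (x - S n)).
    assert (0 <= match (x - S n)%nat with O => 0 | S y' => kpow K n x y' * up y' end).
    { destruct (x - S n)%nat; [lra|]. pose proof (kpow_nonneg n x n0); pose proof (up_b n0). nra. }
    nra.
Qed.

Lemma kpow_to0 x : 0 < kpow K (S x) x 0.
Proof.
  rewrite kpow_S. pose proof (kpow_reach x x (le_n _)). rewrite Nat.sub_diag in H.
  unfold Kcomb. pose proof sK0_pos. pose proof (kpow_nonneg x x 1). pose proof (dn_b 0). nra.
Qed.

Lemma inv_of_balance (m : nat -> R) :
  (forall z, m (S z) * dn z = m z * up z) -> forall y, Kcomb up dn m y = m y.
Proof.
  intros Hb y. unfold Kcomb, sK. destruct y.
  - rewrite Hb. ring.
  - pose proof (Hb y) as H1; pose proof (Hb (S y)) as H2. nra.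
Qed.


Variables A D : R.
Hypothesis lim_up : is_lim_seq up A.
Hypothesis lim_dn : is_lim_seq dn D.
Hypothesis HD : 0 < D.
Hypothesis HA : 0 <= A <= D / 2.

Definition e0 := D / 120.
Definition qq := (A + e0) / (D - e0).

Lemma qq_bounds : 0 < qq /\ 3 / 2 * qq < 1.
Proof.
  unfold qq, e0. split.
  - apply Rdiv_lt_0_compat; lra.
  - apply Rmult_lt_reg_r with (D - D / 120); [lra|].
    field_simplify; lra.
Qed.

Lemma get_Z : exists Z, forall y, (Z <= y)%nat ->
  Rabs (up y - A) < e0 /\ Rabs (dn y - D) < e0.
Proof.
  assert (He : 0 < e0) by (unfold e0; lra).
  apply is_lim_seq_spec in lim_up. apply is_lim_seq_spec in lim_dn.
  destruct (lim_up (mkposreal _ He)) as [Z1 H1].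
  destruct (lim_dn (mkposreal _ He)) as [Z2 H2].
  exists (Z1 + Z2)%nat. intros y Hy. split; [apply H1|apply H2]; lia.
Qed.

Fixpoint w0 (z : nat) : R := match z with O => 1 | S z' => w0 z' * up z' / dn z' end.

Lemma w0_pos z : 0 < w0 z.
Proof.
  induction z; simpl; [lra|]. pose proof (up_b z); pose proof (dn_b z).
  apply Rdiv_lt_0_compat; [nra|lra].
Qed.

Lemma w0_bal z : w0 (S z) * dn z = w0 z * up z.
Proof. simpl. pose proof (dn_b z). field. lra. Qed.

Lemma w0_geom Z : (forall y, (Z <= y)%nat -> Rabs (up y - A) < e0 /\ Rabs (dn y - D) < e0) ->
  exists K0, forall z, w0 z <= K0 * qq ^ z.
Proof.
  intros HZ. destruct qq_bounds as [q0 q1].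
  destruct (fin_max (fun z => w0 z / qq ^ z) Z) as [K0 HK].
  exists K0. intros z. induction z as [|z IH].
  - specialize (HK 0%nat (Nat.le_0_l _)). simpl in *. lra.
  - destruct (le_lt_dec (S z) Z) as [h|h].
    + specialize (HK (S z) h). simpl in HK.
      assert (0 < qq * qq ^ z) by (apply Rmult_lt_0_compat; [lra|apply pow_lt; lra]).
      simpl. apply Rmult_le_reg_r with (/ (qq * qq ^ z)); [apply Rinv_0_lt_compat; lra|].
      rewrite Rmult_assoc, Rinv_r by lra. lra.
    + destruct (HZ z ltac:(lia)) as [Hu Hd]. apply Rabs_def2 in Hu; apply Rabs_def2 in Hd.
      assert (Hr : up z / dn z <= qq).
      { unfold qq. pose proof (dn_b z). unfold e0 in *.
        apply Rmult_le_reg_r with (dn z * (D - D/120)). nra.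
        field_simplify; [nra|lra|lra]. }
      simpl. pose proof (w0_pos z). pose proof (dn_b z).
      replace (w0 z * up z / dn z) with (w0 z * (up z / dn z)) by (field; lra).
      apply Rle_trans with (w0 z * qq). apply Rmult_le_compat_l; lra.
      replace (K0 * (qq * qq ^ z)) with ((K0 * qq ^ z) * qq) by ring.
      apply Rmult_le_compat_r; lra.
Qed.

Lemma geom_psum (t : R) (Y : nat) : 0 <= t < 1 -> sum_f_R0 (fun i => t ^ i) Y <= / (1 - t).
Proof.
  intros Ht. rewrite tech3 by lra. pose proof (pow_le t (S Y) ltac:(lra)).
  unfold Rdiv. rewrite <- (Rmult_1_l (/ (1 - t))) at 2.
  apply Rmult_le_compat_r. left; apply Rinv_0_lt_compat; lra. lra.
Qed.

Lemma geom_scaled (c q : R) : 0 <= q < 1 -> is_series (fun n => c * q ^ n) (c * / (1 - q)).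
Proof.
  intros Hq. pose proof (is_series_scal_l c _ _ (is_series_geom q ltac:(rewrite Rabs_pos_eq; lra))) as H.
  exact H.
Qed.

Lemma pow_inv_ge (q : R) (x z : nat) : 0 < q <= 1 -> (z <= x)%nat -> 1 <= (/ q) ^ x * q ^ z.
Proof.
  intros Hq Hz. replace x with ((x - z) + z)%nat by lia. rewrite pow_add.
  rewrite Rmult_assoc, <- Rpow_mult_distr, Rinv_l, pow1 by lra. rewrite Rmult_1_r.
  apply pow_R1_Rle. rewrite <- Rinv_1. apply Rinv_le_contravar; lra.
Qed.

Lemma delta_sum (x z : nat) :
  sum_f_R0 (fun w => if Nat.eqb x w then 1 else 0) z = if Nat.leb x z then 1 else 0.
Proof.
  induction z; simpl.
  - destruct x; simpl; reflexivity.
  - rewrite IHz. destruct (Nat.leb_spec x z); destruct (Nat.eqb_spec x (S z));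
      destruct (Nat.leb_spec x (S z)); try lia; lra.
Qed.

Lemma mu_facts Z : (forall y, (Z <= y)%nat -> Rabs (up y - A) < e0 /\ Rabs (dn y - D) < e0) ->
  exists mu : nat -> R, exists Cb : R,
    (forall y, 0 <= mu y) /\ is_series mu 1 /\
    (forall z, mu (S z) * dn z = mu z * up z) /\ 0 <= Cb /\
    (forall x z, Rabs (sum_f_R0 (fun w => (if Nat.eqb x w then 1 else 0) - mu w) z)
                 <= Cb * (/ qq) ^ x * qq ^ z).
Proof.
  intros HZ. destruct (w0_geom Z HZ) as [K0 HK]. destruct qq_bounds as [q0 q1].
  assert (Hq : 0 <= qq < 1) by lra.
  assert (K0p : 0 < K0). { specialize (HK 0%nat). pose proof (w0_pos 0). simpl in HK. lra. }
  assert (Ew : ex_series w0).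
  { apply (ex_series_le w0 (fun z => K0 * qq ^ z)).
    - intros n. unfold norm; simpl. unfold abs; simpl. rewrite Rabs_pos_eq; [apply HK|left; apply w0_pos].
    - eexists. apply geom_scaled; lra. }
  set (Sw := Series w0).
  assert (Swp : 1 <= Sw).
  { pose proof (psum_le_series w0 0 (fun k => Rlt_le _ _ (w0_pos k)) Ew). simpl in H. exact H. }
  set (mu := fun z => w0 z / Sw).
  assert (Fmu : forall n, sum_f_R0 mu n = sum_f_R0 w0 n / Sw).
  { intros n. unfold mu, Rdiv. rewrite (Rmult_comm (sum_f_R0 w0 n)), scal_sum. reflexivity. }
  assert (mupos : forall y, 0 <= mu y).
  { intros y. unfold mu. left. apply Rdiv_lt_0_compat; [apply w0_pos|lra]. }
  assert (Smu : is_series mu 1).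
  { apply series_of_lim. apply is_lim_seq_ext with (fun n => sum_f_R0 w0 n * / Sw).
    { intros n; rewrite Fmu; reflexivity. }
    replace (Finite 1) with (Finite (Sw * / Sw)) by (f_equal; field; lra).
    apply is_lim_seq_mult'; [apply ex_series_lim; exact Ew|apply is_lim_seq_const]. }
  assert (Emu : ex_series mu) by (exists 1; exact Smu).
  assert (SmuE : Series mu = 1) by (apply is_series_unique; exact Smu).
  set (Cm := K0 / Sw).
  assert (mub : forall z, mu z <= Cm * qq ^ z).
  { intros z. unfold mu, Cm. unfold Rdiv. rewrite Rmult_assoc, (Rmult_comm (/ Sw)), <- Rmult_assoc.
    apply Rmult_le_compat_r; [left; apply Rinv_0_lt_compat; lra|apply HK]. }
  assert (Cmp : 0 < Cm) by (unfold Cm; apply Rdiv_lt_0_compat; lra).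
  assert (tail : forall z, 0 <= 1 - sum_f_R0 mu z <= Cm * qq / (1 - qq) * qq ^ z).
  { intros z. pose proof (Series_incr_n mu (S z) ltac:(lia) Emu) as E. simpl pred in E.
    rewrite SmuE in E.
    assert (Et : Series (fun k => mu (S z + k)%nat) <= Cm * qq / (1 - qq) * qq ^ z).
    { eapply Rle_trans. apply (Series_le _ (fun k => (Cm * qq ^ S z) * qq ^ k)).
      - intros n; split; [apply mupos|]. rewrite Rmult_assoc, <- pow_add. apply mub.
      - eexists. apply geom_scaled; lra.
      - rewrite (is_series_unique _ _ (geom_scaled _ qq ltac:(lra))).
        simpl. right. field. lra. }
    assert (E0 : 0 <= Series (fun k => mu (S z + k)%nat)).
    { pose proof (psum_le_series (fun k => mu (S z + k)%nat) 0 (fun k => mupos _)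
         (proj1 (ex_series_incr_n mu (S z)) Emu)) as P.
      change (sum_f_R0 (fun k => mu (S z + k)%nat) 0) with (mu (S z + 0)%nat) in P.
      pose proof (mupos (S z + 0)%nat). lra. }
    lra. }
  exists mu, (1 + Cm * qq / (1 - qq)).
  assert (T0 : 0 <= Cm * qq / (1 - qq)) by (apply Rdiv_le_0_compat; nra).
  split; [exact mupos|]. split; [exact Smu|]. split.
  { intros z. unfold mu. pose proof (w0_bal z). unfold Rdiv.
    replace (w0 (S z) * / Sw * dn z) with (w0 (S z) * dn z * / Sw) by ring. rewrite H. ring. }
  split; [lra|].
  intros x z. rewrite minus_sum, delta_sum.
  pose proof (tail z) as Tz. pose proof (sum_nonneg mu z mupos).
  assert (Qz : 0 <= qq ^ z) by (apply pow_le; lra).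
  destruct (Nat.leb_spec x z).
  - assert (P : 1 <= (/ qq) ^ x) by (apply pow_R1_Rle; rewrite <- Rinv_1; apply Rinv_le_contravar; lra).
    rewrite Rabs_pos_eq by lra.
    apply Rle_trans with (Cm * qq / (1 - qq) * qq ^ z); [lra|].
    set (T := Cm * qq / (1 - qq)) in *. set (P' := (/ qq) ^ x) in *.
    assert (T <= (1 + T) * P') by nra. nra.
  - pose proof (pow_inv_ge qq x z ltac:(lra) ltac:(lia)) as P.
    rewrite Rabs_left1 by lra.
    rewrite Rmult_assoc. apply Rle_trans with (1 * ((/ qq) ^ x * qq ^ z)); [lra|].
    apply Rmult_le_compat_r; lra.
Qed.

Definition kap (Z : nat) := up 0 / INR (Z + 2).
Fixpoint gw (Z : nat) (z : nat) : R :=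
  match z with
  | O => 1
  | S z' => if Nat.ltb z' Z then (dn z' * gw Z z' + kap Z * (INR Z + 1 - INR z')) / up (S z')
            else 3 / 2 * gw Z z'
  end.

Lemma kap_pos Z : 0 < kap Z.
Proof. unfold kap. pose proof (up_b 0). apply Rdiv_lt_0_compat; [lra|]. apply lt_0_INR; lia. Qed.

Lemma gw_pos Z z : 0 < gw Z z.
Proof.
  induction z; simpl; [lra|]. destruct (Nat.ltb_spec z Z).
  - pose proof (dn_b z). pose proof (up_b (S z)). pose proof (kap_pos Z).
    assert (INR z <= INR Z) by (apply le_INR; lia).
    apply Rdiv_lt_0_compat; [|lra]. nra.
  - lra.
Qed.

Lemma gw_lt Z z : (z < Z)%nat -> up (S z) * gw Z (S z) = dn z * gw Z z + kap Z * (INR Z + 1 - INR z).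
Proof.
  intros H. simpl. destruct (Nat.ltb_spec z Z); [|lia]. pose proof (up_b (S z)). field. lra.
Qed.

Lemma gw_ge Z z : (Z <= z)%nat -> gw Z (S z) = 3 / 2 * gw Z z.
Proof. intros H. simpl. destruct (Nat.ltb_spec z Z); [lia|]. reflexivity. Qed.

Lemma gw_key Z z : (z <= Z)%nat ->
  up z * gw Z z = match z with O => 0 | S z' => dn z' * gw Z z' end + kap Z * (INR Z + 2 - INR z).
Proof.
  intros H. destruct z.
  - simpl. unfold kap. rewrite plus_INR. simpl. field. pose proof (pos_INR Z). lra.
  - rewrite gw_lt by lia. rewrite S_INR. ring.
Qed.

Lemma D_le1 : D <= 1.
Proof.
  assert (R : Rbar_le D 1).
  { apply (is_lim_seq_le dn (fun _ => 1) D 1); auto. intros n; pose proof (dn_b n); lra.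
    apply is_lim_seq_const. }
  exact R.
Qed.

Lemma g_good Z : (forall y, (Z <= y)%nat -> Rabs (up y - A) < e0 /\ Rabs (dn y - D) < e0) ->
  exists g : nat -> R, exists rho m0 G : R,
    (forall z, 0 < g z) /\ (forall z, Mg up dn g z <= rho * g z) /\ 0 <= rho < 1 /\
    0 < m0 /\ (forall z, m0 <= g z) /\ 0 <= G /\ (forall z, g z <= G * (3 / 2) ^ z).
Proof.
  intros HZ. set (g := gw Z). pose proof (kap_pos Z) as kp. pose proof D_le1.
  assert (gpos : forall z, 0 < g z) by (intro; apply gw_pos).
  destruct (fin_max g Z) as [G0 HG0].
  assert (G0p : 1 <= G0) by (apply (HG0 0%nat); lia).
  destruct (fin_min g Z (gw_pos Z)) as [m0 [m0p Hm0]].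
  set (dl := Rmin (kap Z / G0) (D / 24)).
  assert (dlp : 0 < dl) by (apply Rmin_glb_lt; [apply Rdiv_lt_0_compat|]; lra).
  assert (dl1 : dl <= D / 24) by apply Rmin_r.
  assert (dl2 : forall z, (z <= Z)%nat -> dl * g z <= kap Z).
  { intros z Hz. pose proof (HG0 z Hz). pose proof (gpos z).
    apply Rle_trans with (kap Z / G0 * g z). apply Rmult_le_compat_r; [lra|apply Rmin_l].
    unfold Rdiv. rewrite Rmult_assoc. rewrite <- (Rmult_1_r (kap Z)) at 2.
    apply Rmult_le_compat_l; [lra|]. apply Rmult_le_reg_l with G0; [lra|].
    rewrite <- Rmult_assoc, Rinv_r by lra. lra. }
  exists g, (1 - dl), m0, G0.
  split; [apply gw_pos|]. split.
  2:{ split; [lra|]. split; [exact m0p|]. split.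
      - intros z. induction z; [apply Hm0; lia|].
        destruct (le_lt_dec (S z) Z); [apply Hm0; lia|].
        unfold g in *. rewrite gw_ge by lia. pose proof (gw_pos Z z). lra.
      - split; [lra|]. intros z. induction z; [specialize (HG0 0%nat ltac:(lia)); simpl; lra|].
        destruct (le_lt_dec (S z) Z).
        + apply Rle_trans with G0; [apply HG0; lia|].
          rewrite <- (Rmult_1_r G0) at 1. apply Rmult_le_compat_l; [lra|]. apply pow_R1_Rle; lra.
        + unfold g in *. rewrite gw_ge by lia. simpl. lra. }
  intros z. unfold Mg. destruct (lt_eq_lt_dec z Z) as [[Hlt|Heq]|Hgt].
  - pose proof (gw_lt Z z Hlt) as E1. pose proof (gw_key Z z ltac:(lia)) as E2.
    pose proof (dl2 z ltac:(lia)). unfold g in *.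
    destruct z; rewrite ?S_INR in *; cbv iota beta in E2 |- *; lra.
  - subst z. pose proof (gw_key Z Z (le_n _)) as E2. unfold g. rewrite (gw_ge Z Z (le_n _)).
    pose proof (dl2 Z (le_n _)). unfold g in *.
    destruct (HZ Z (le_n _)) as [_ Hd]. destruct (HZ (S Z) ltac:(lia)) as [Hu _].
    apply Rabs_def2 in Hd; apply Rabs_def2 in Hu. unfold e0 in *.
    assert (B : 3 / 2 * up (S Z) - dn Z <= 0) by lra.
    pose proof (gw_pos Z Z).
    assert (B2 : gw Z Z * (3 / 2 * up (S Z) - dn Z) <= 0) by nra.
    destruct Z; cbv iota beta in E2 |- *; lra.
  - destruct z as [|z]; [lia|].
    unfold g. rewrite (gw_ge Z (S z)) by lia. rewrite (gw_ge Z z) by lia.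
    destruct (HZ z ltac:(lia)) as [_ Hd0]. destruct (HZ (S z) ltac:(lia)) as [Hu1 Hd1].
    destruct (HZ (S (S z)) ltac:(lia)) as [Hu2 _].
    apply Rabs_def2 in Hd0; apply Rabs_def2 in Hd1; apply Rabs_def2 in Hu1; apply Rabs_def2 in Hu2.
    unfold e0 in *.
    assert (B : 9 / 4 * up (S (S z)) + 3 / 2 * (1 - up (S z) - dn (S z)) + dn z <= (1 - dl) * (3 / 2)) by lra.
    pose proof (gw_pos Z z). nra.
Qed.

Lemma Kcomb_minus u v y : Kcomb up dn (fun z => u z - v z) y = Kcomb up dn u y - Kcomb up dn v y.
Proof. unfold Kcomb. destruct y; ring. Qed.

Theorem BD_geo : geometrically_ergodic K.
Proof.
  destruct get_Z as [Z HZ].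
  destruct (mu_facts Z HZ) as [mu [Cb [mupos [Smu [mubal [Cbp H0b]]]]]].
  destruct (g_good Z HZ) as [g [rho [m0 [G [gpos [gM [rhob [m0p [gm [Gp gG]]]]]]]]]].
  destruct qq_bounds as [q0 q1].
  set (t := 3 / 2 * qq).
  exists (fun y => if Nat.eqb y 0 then 1 else 0).
  split; [intros y; destruct (Nat.eqb y 0); lra|].
  split; [exists 0%nat; simpl; lra|].
  split.
  { intros x y Hy. destruct y; [|simpl in Hy; lra]. exists (S x). split; [lia|]. apply kpow_to0. }
  split.
  { intros y Hy d Hd. destruct y; [|simpl in Hy; lra]. exists 1%nat. split; [lia|]. split.
    - pose proof (kpow_reach 0 0 (le_n _)) as P. simpl in P.
      rewrite kpow_S. unfold Kcomb. simpl.
      pose proof sK0_pos. pose proof (dn_b 0). nra.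
    - rewrite Nat.mod_small by lia. lia. }
  exists mu. split; [exact mupos|]. split; [exact Smu|]. split.
  { intros y. rewrite <- (inv_of_balance mu mubal y). apply series_K. }
  set (B0 := fun x : nat => G * Cb * (/ qq) ^ x * / (1 - t)).
  exists (fun x => (/ qq) ^ x), rho, (2 / m0 * G * Cb / (1 - t)).
  split.
  { intros x. apply pow_R1_Rle. rewrite <- Rinv_1. apply Rinv_le_contravar; lra. }
  split; [lra|]. split; [lra|].
  intros x n Ab.
  set (h := fun n y => kpow K n x y - mu y).
  assert (Ch : forall n y, h (S n) y = Kcomb up dn (h n) y).
  { intros m y. unfold h. rewrite Kcomb_minus, kpow_S, (inv_of_balance mu mubal). reflexivity. }
  assert (Bn : forall n Y, sum_f_R0 (fun z => g z * Rabs (sum_f_R0 (h n) z)) Y <= rho ^ n * B0 x).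
  { induction n0; intros Y.
    - simpl. rewrite Rmult_1_l.
      apply Rle_trans with (sum_f_R0 (fun z => G * Cb * (/ qq) ^ x * t ^ z) Y).
      + apply sum_le. intros z. unfold h. simpl kpow.
        specialize (H0b x z). specialize (gG z). pose proof (gpos z).
        pose proof (Rabs_pos (sum_f_R0 (fun w => (if Nat.eqb x w then 1 else 0) - mu w) z)).
        unfold t. rewrite Rpow_mult_distr.
        apply Rle_trans with (G * (3 / 2) ^ z * (Cb * (/ qq) ^ x * qq ^ z)).
        * apply Rmult_le_compat; auto; lra.
        * right; ring.
      + replace (sum_f_R0 (fun z => G * Cb * (/ qq) ^ x * t ^ z) Y) with
          (G * Cb * (/ qq) ^ x * sum_f_R0 (fun z => t ^ z) Y) by (rewrite scal_sum; apply sum_eq; intros; ring).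
        unfold B0. apply Rmult_le_compat_l.
        * apply Rmult_le_pos; [apply Rmult_le_pos; lra|]. apply pow_le. left; apply Rinv_0_lt_compat; lra.
        * apply geom_psum. unfold t; lra.
    - eapply Rle_trans.
      + apply (contract up dn g (sum_f_R0 (h n0)) (sum_f_R0 (h (S n0))) rho).
        * intros z; pose proof (up_b z); lra.
        * intros z; pose proof (dn_b z); lra.
        * intros z; pose proof (up_b z); pose proof (dn_b z); lra.
        * exact gpos.
        * exact gM.
        * intros y. rewrite <- Hupdate. apply sum_eq. intros; apply Ch.
      + change (rho ^ S n0) with (rho * rho ^ n0). rewrite Rmult_assoc.
        apply Rmult_le_compat_l; [lra|]. apply IHn0. }
  assert (Hb : forall Y, sum_f_R0 (fun y => Rabs (if Ab y then h n y else 0)) Y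
                 <= 2 / m0 * G * Cb / (1 - t) * (/ qq) ^ x * rho ^ n).
  { intros Y. eapply Rle_trans.
    - apply (sum_le _ (fun y => Rabs (h n y))). intros y. destruct (Ab y); [lra|]. rewrite Rabs_R0. apply Rabs_pos.
    - eapply Rle_trans; [apply h_le_H|].
      apply Rle_trans with (2 * (/ m0 * sum_f_R0 (fun z => g z * Rabs (sum_f_R0 (h n) z)) Y)).
      + apply Rmult_le_compat_l; [lra|]. rewrite scal_sum. apply sum_le. intros z.
        pose proof (gm z). pose proof (Rabs_pos (sum_f_R0 (h n) z)).
        apply Rle_trans with (m0 * / m0 * Rabs (sum_f_R0 (h n) z)).
        * rewrite Rinv_r by lra. lra.
        * replace (g z * Rabs (sum_f_R0 (h n) z) * / m0) with (g z * / m0 * Rabs (sum_f_R0 (h n) z)) by ring.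
          apply Rmult_le_compat_r; [auto|]. apply Rmult_le_compat_r; [left; apply Rinv_0_lt_compat|]; lra.
      + specialize (Bn n Y). unfold B0 in Bn.
        assert (0 < / m0) by (apply Rinv_0_lt_compat; lra).
        apply Rle_trans with (2 * (/ m0 * (rho ^ n * (G * Cb * (/ qq) ^ x * / (1 - t))))).
        * apply Rmult_le_compat_l; [lra|]. apply Rmult_le_compat_l; lra.
        * right. unfold Rdiv. ring. }
  assert (Ea : ex_series (fun y => Rabs (if Ab y then h n y else 0))).
  { apply ex_series_bounded with (2 / m0 * G * Cb / (1 - t) * (/ qq) ^ x * rho ^ n); auto.
    intros; apply Rabs_pos. }
  eapply Rle_trans; [apply Series_Rabs; exact Ea|].
  apply series_le_bound; auto.
Qed.

End BD.


Section Main.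
Variables (theta : R) (b eps : nat -> R) (N : nat).
Definition upK x := theta * accept theta b eps N (S x) (S (S x)).
Definition dnK y := (1 - theta) * accept theta b eps N (S (S y)) (S y).
Let K := noisy_kernel theta b eps N.

Lemma qprop_up m : qprop theta m (S m) = theta.
Proof. unfold qprop. rewrite Nat.eqb_refl. reflexivity. Qed.
Lemma qprop_dn m : qprop theta (S m) m = 1 - theta.
Proof. unfold qprop. destruct (Nat.eqb_spec m (S (S m))); [lia|]. rewrite Nat.eqb_refl. reflexivity. Qed.

Lemma Kc_up x : K x (S x) = upK x.
Proof. unfold K, noisy_kernel, noisy_kernel_orig, upK. rewrite Nat.eqb_refl, qprop_up. reflexivity. Qed.

Lemma Kc_dn y : K (S y) y = dnK y.
Proof.
  unfold K, noisy_kernel, noisy_kernel_orig, dnK.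
  destruct (Nat.eqb_spec (S y) (S (S (S y)))); [lia|].
  simpl Nat.leb. simpl pred. rewrite Nat.eqb_refl. simpl andb. rewrite qprop_dn. reflexivity.
Qed.

Lemma Kc_st x : K x x = sK upK dnK x.
Proof.
  unfold K, noisy_kernel, noisy_kernel_orig, sK.
  destruct (Nat.eqb_spec (S x) (S (S x))); [lia|]. rewrite Nat.eqb_refl.
  destruct x as [|x].
  - simpl. rewrite qprop_up. unfold upK. ring.
  - simpl Nat.leb. simpl pred. destruct (Nat.eqb_spec (S (S x)) (S x)); [lia|]. simpl andb.
    rewrite qprop_up, qprop_dn. unfold upK, dnK. ring.
Qed.

Lemma Kc_0 x y : y <> S x -> x <> S y -> x <> y -> K x y = 0.
Proof.
  intros H1 H2 H3. unfold K, noisy_kernel, noisy_kernel_orig.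
  destruct x as [|x]; simpl;
  repeat match goal with |- context [Nat.eqb ?a ?b] => destruct (Nat.eqb_spec a b); try lia end;
  simpl; reflexivity.
Qed.

Hypothesis Hth : 0 < theta < 1.
Hypothesis Hb : forall m : nat, (1 <= m)%nat -> 1 < b m.
Hypothesis Heps : forall m : nat, (1 <= m)%nat -> 0 < eps m <= 1.
Hypothesis HN : (1 <= N)%nat.

Definition acc (m y : nat) (c : R) : R :=
  sum_f_R0 (fun k => sum_f_R0 (fun j =>
    wprob b eps N m k * wprob b eps N y j * Rmin 1 (c * (wval b eps N y j / wval b eps N m k))) N) N.

Lemma s_bounds m : (1 <= m)%nat -> 0 <= s_par b eps m < 1.
Proof.
  intros H. unfold s_par. pose proof (Hb m H). pose proof (Heps m H). split.
  - apply Rdiv_le_0_compat; lra.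
  - apply Rmult_lt_reg_r with (b m - eps m); [lra|]. field_simplify; lra.
Qed.

Lemma wprob_nonneg m k : (1 <= m)%nat -> 0 <= wprob b eps N m k.
Proof.
  intros H. pose proof (s_bounds m H). unfold wprob, binomR.
  apply Rmult_le_pos; [apply Rmult_le_pos|apply pow_le; lra]; [|apply pow_le; lra].
  unfold Binomial.C. apply Rdiv_le_0_compat; [apply pos_INR|].
  apply Rmult_lt_0_compat; apply lt_0_INR; apply lt_O_fact.
Qed.

Lemma Cn0 n : Binomial.C n 0 = 1.
Proof.
  unfold Binomial.C. rewrite Nat.sub_0_r. simpl. pose proof (INR_fact_neq_0 n). field. auto.
Qed.

Lemma wprob0_pos m : (1 <= m)%nat -> 0 < wprob b eps N m 0.
Proof.
  intros H. pose proof (s_bounds m H). unfold wprob, binomR. rewrite Cn0, pow_O, Nat.sub_0_r, !Rmult_1_l.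
  apply pow_lt. lra.
Qed.

Lemma wprob_sum m : (1 <= m)%nat -> sum_f_R0 (wprob b eps N m) N = 1.
Proof.
  intros H. unfold wprob, binomR. rewrite <- Binomial.binomial.
  replace (s_par b eps m + (1 - s_par b eps m)) with 1 by ring. apply pow1.
Qed.

Lemma wval_pos m k : (1 <= m)%nat -> 0 < wval b eps N m k.
Proof.
  intros H. unfold wval. pose proof (Hb m H). pose proof (Heps m H).
  assert (0 < INR N) by (apply lt_0_INR; lia).
  pose proof (pos_INR k).
  assert (0 <= (b m - eps m) / INR N) by (apply Rdiv_le_0_compat; lra). nra.
Qed.

Lemma acc_bounds m y c : (1 <= m)%nat -> (1 <= y)%nat -> 0 < c -> 0 < acc m y c <= 1.
Proof.
  intros Hm Hy Hc. unfold acc.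
  assert (T : forall k j, 0 <= Rmin 1 (c * (wval b eps N y j / wval b eps N m k)) <= 1).
  { intros k j. split; [|apply Rmin_l]. apply Rmin_glb; [lra|].
    pose proof (wval_pos y j Hy). pose proof (wval_pos m k Hm).
    left. apply Rmult_lt_0_compat; [lra|]. apply Rdiv_lt_0_compat; lra. }
  split.
  - apply sum_pos.
    + intros k. apply sum_nonneg. intros j. specialize (T k j).
      pose proof (wprob_nonneg m k Hm); pose proof (wprob_nonneg y j Hy).
      apply Rmult_le_pos; [apply Rmult_le_pos|]; lra.
    + apply sum_pos.
      * intros j. specialize (T 0%nat j).
        pose proof (wprob_nonneg m 0 Hm); pose proof (wprob_nonneg y j Hy).
        apply Rmult_le_pos; [apply Rmult_le_pos|]; lra.
      * pose proof (wprob0_pos m Hm); pose proof (wprob0_pos y Hy).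
        pose proof (wval_pos y 0 Hy). pose proof (wval_pos m 0 Hm).
        apply Rmult_lt_0_compat; [apply Rmult_lt_0_compat; lra|].
        apply Rmin_glb_lt; [lra|]. apply Rmult_lt_0_compat; [lra|]. apply Rdiv_lt_0_compat; lra.
  - apply Rle_trans with (sum_f_R0 (fun k => wprob b eps N m k * sum_f_R0 (wprob b eps N y) N) N).
    + apply sum_le. intros k. rewrite scal_sum. apply sum_le. intros j.
      specialize (T k j). pose proof (wprob_nonneg m k Hm); pose proof (wprob_nonneg y j Hy).
      assert (0 <= wprob b eps N m k * wprob b eps N y j) by (apply Rmult_le_pos; lra). nra.
    + rewrite wprob_sum by exact Hy. right.
      replace (sum_f_R0 (fun k => wprob b eps N m k * 1) N) with (sum_f_R0 (wprob b eps N m) N)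
        by (apply sum_eq; intros; ring).
      apply wprob_sum; exact Hm.
Qed.

Definition kap0 := (1 - theta) / (2 * theta).

Lemma kap0_pos : 0 < kap0.
Proof. unfold kap0. apply Rdiv_lt_0_compat; lra. Qed.

Lemma accept_up x : accept theta b eps N (S x) (S (S x)) = acc (S x) (S (S x)) kap0.
Proof.
  unfold accept, acc.
  replace (pi_target (S (S x)) * qprop theta (S (S x)) (S x) / (pi_target (S x) * qprop theta (S x) (S (S x))))
    with kap0. reflexivity.
  rewrite qprop_up, qprop_dn. unfold pi_target. simpl Nat.leb. cbv iota.
  unfold kap0. change ((1/2) ^ S (S x)) with (1/2 * (1/2) ^ S x).
  assert (0 < (1/2) ^ S x) by (apply pow_lt; lra). field. lra.
Qed.

Lemma accept_dn x : accept theta b eps N (S (S x)) (S x) = acc (S (S x)) (S x) (/ kap0).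
Proof.
  unfold accept, acc.
  replace (pi_target (S x) * qprop theta (S x) (S (S x)) / (pi_target (S (S x)) * qprop theta (S (S x)) (S x)))
    with (/ kap0). reflexivity.
  rewrite qprop_up, qprop_dn. unfold pi_target. simpl Nat.leb. cbv iota.
  unfold kap0. change ((1/2) ^ S (S x)) with (1/2 * (1/2) ^ S x).
  assert (0 < (1/2) ^ S x) by (apply pow_lt; lra). field. lra.
Qed.

Lemma upK_b x : 0 < upK x <= theta.
Proof.
  unfold upK. rewrite accept_up. pose proof (acc_bounds (S x) (S (S x)) kap0 ltac:(lia) ltac:(lia) kap0_pos).
  split; [apply Rmult_lt_0_compat|]; nra.
Qed.

Lemma dnK_b x : 0 < dnK x <= 1 - theta.
Proof.
  unfold dnK. rewrite accept_dn.
  pose proof (acc_bounds (S (S x)) (S x) (/ kap0) ltac:(lia) ltac:(lia) (Rinv_0_lt_compat _ kap0_pos)).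
  split; [apply Rmult_lt_0_compat|]; nra.
Qed.

Lemma s_lim_gen (mm : nat -> nat) :
  is_lim_seq (fun x => b (mm x)) p_infty -> is_lim_seq (fun x => eps (mm x)) 0 ->
  is_lim_seq (fun x => s_par b eps (mm x)) 0.
Proof.
  intros H1 H2. unfold s_par.
  assert (L1 : is_lim_seq (fun x => b (mm x) - eps (mm x)) p_infty).
  { apply (is_lim_seq_minus _ _ p_infty 0 p_infty H1 H2). reflexivity. }
  apply is_lim_seq_inv in L1; [|discriminate]. simpl in L1.
  replace (Finite 0) with (Finite ((1 - 0) * 0)) by (f_equal; ring).
  apply is_lim_seq_mult'; [|exact L1].
  apply is_lim_seq_minus'; [apply is_lim_seq_const|exact H2].
Qed.

Definition ind0 (k : nat) : R := if Nat.eqb k 0 then 1 else 0.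

Lemma wprob_lim (mm : nat -> nat) (k : nat) :
  is_lim_seq (fun x => s_par b eps (mm x)) 0 ->
  is_lim_seq (fun x => wprob b eps N (mm x) k) (ind0 k).
Proof.
  intros H. unfold wprob.
  replace (ind0 k) with (binomR N k * 0 ^ k * (1 - 0) ^ (N - k)).
  - apply is_lim_seq_mult'; [apply is_lim_seq_mult'; [apply is_lim_seq_const|]|].
    + apply lim_pow. exact H.
    + apply lim_pow. apply is_lim_seq_minus'; [apply is_lim_seq_const|exact H].
  - unfold ind0. destruct k; simpl.
    + unfold binomR. rewrite Cn0. replace (1 - 0) with 1 by ring. rewrite pow1. ring.
    + ring.
Qed.

Lemma acc_lim (mm yy : nat -> nat) (c L : R) :
  (forall x, (1 <= mm x)%nat) -> (forall x, (1 <= yy x)%nat) -> 0 < c ->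
  is_lim_seq (fun x => s_par b eps (mm x)) 0 -> is_lim_seq (fun x => s_par b eps (yy x)) 0 ->
  is_lim_seq (fun x => Rmin 1 (c * (eps (yy x) / eps (mm x)))) L ->
  is_lim_seq (fun x => acc (mm x) (yy x) c) L.
Proof.
  intros Hm Hy Hc Sm Sy HL. unfold acc.
  set (Lkj := fun k j : nat => if Nat.eqb k 0 then if Nat.eqb j 0 then L else 0 else 0).
  replace L with (sum_f_R0 (fun k => sum_f_R0 (Lkj k) N) N).
  2:{ rewrite sum_only0.
      - rewrite sum_only0. reflexivity. intros j Hj. unfold Lkj. destruct j; [lia|]. reflexivity.
      - intros k Hk. apply sum_zero_upto. intros j _. unfold Lkj. destruct k; [lia|]. reflexivity. }
  apply lim_sum. intros k. apply lim_sum. intros j.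
  destruct (Nat.eqb_spec k 0); destruct (Nat.eqb_spec j 0).
  - subst. unfold Lkj. simpl.
    apply is_lim_seq_ext with (fun x => wprob b eps N (mm x) 0 * wprob b eps N (yy x) 0 *
                                         Rmin 1 (c * (eps (yy x) / eps (mm x)))).
    { intros x. unfold wval. simpl INR. f_equal. f_equal. f_equal. f_equal; ring. }
    replace L with (1 * 1 * L) at 1 by ring.
    apply is_lim_seq_mult'; [apply is_lim_seq_mult'|exact HL].
    + apply (wprob_lim mm 0 Sm).
    + apply (wprob_lim yy 0 Sy).
  - assert (Lkj k j = 0) as E by (unfold Lkj; subst; simpl; destruct (Nat.eqb_spec j 0); [lia|reflexivity]).
    rewrite E.
    apply is_lim_seq_le_le with (fun _ => 0) (fun x => wprob b eps N (mm x) k * wprob b eps N (yy x) j).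
    + intros x. pose proof (acc_bounds (mm x) (yy x) c (Hm x) (Hy x) Hc).
      pose proof (wprob_nonneg (mm x) k (Hm x)); pose proof (wprob_nonneg (yy x) j (Hy x)).
      pose proof (wval_pos (yy x) j (Hy x)). pose proof (wval_pos (mm x) k (Hm x)).
      assert (0 <= Rmin 1 (c * (wval b eps N (yy x) j / wval b eps N (mm x) k)) <= 1).
      { split; [|apply Rmin_l]. apply Rmin_glb; [lra|]. left. apply Rmult_lt_0_compat; [lra|].
        apply Rdiv_lt_0_compat; lra. }
      assert (0 <= wprob b eps N (mm x) k * wprob b eps N (yy x) j) by (apply Rmult_le_pos; lra).
      split; nra.
    + apply is_lim_seq_const.
    + replace (Finite 0) with (Finite (ind0 k * ind0 j)).
      * apply is_lim_seq_mult'; apply wprob_lim; auto.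
      * f_equal. unfold ind0. destruct (Nat.eqb_spec j 0); [lia|]. ring.
  - assert (Lkj k j = 0) as E by (unfold Lkj; destruct (Nat.eqb_spec k 0); [lia|reflexivity]).
    rewrite E.
    apply is_lim_seq_le_le with (fun _ => 0) (fun x => wprob b eps N (mm x) k * wprob b eps N (yy x) j).
    + intros x.
      pose proof (wprob_nonneg (mm x) k (Hm x)); pose proof (wprob_nonneg (yy x) j (Hy x)).
      pose proof (wval_pos (yy x) j (Hy x)). pose proof (wval_pos (mm x) k (Hm x)).
      assert (0 <= Rmin 1 (c * (wval b eps N (yy x) j / wval b eps N (mm x) k)) <= 1).
      { split; [|apply Rmin_l]. apply Rmin_glb; [lra|]. left. apply Rmult_lt_0_compat; [lra|].
        apply Rdiv_lt_0_compat; lra. }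
      assert (0 <= wprob b eps N (mm x) k * wprob b eps N (yy x) j) by (apply Rmult_le_pos; lra).
      split; nra.
    + apply is_lim_seq_const.
    + replace (Finite 0) with (Finite (ind0 k * ind0 j)).
      * apply is_lim_seq_mult'; apply wprob_lim; auto.
      * f_equal. unfold ind0. destruct (Nat.eqb_spec k 0); [lia|]. ring.
  - assert (Lkj k j = 0) as E by (unfold Lkj; destruct (Nat.eqb_spec k 0); [lia|reflexivity]).
    rewrite E.
    apply is_lim_seq_le_le with (fun _ => 0) (fun x => wprob b eps N (mm x) k * wprob b eps N (yy x) j).
    + intros x.
      pose proof (wprob_nonneg (mm x) k (Hm x)); pose proof (wprob_nonneg (yy x) j (Hy x)).
      pose proof (wval_pos (yy x) j (Hy x)). pose proof (wval_pos (mm x) k (Hm x)).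
      assert (0 <= Rmin 1 (c * (wval b eps N (yy x) j / wval b eps N (mm x) k)) <= 1).
      { split; [|apply Rmin_l]. apply Rmin_glb; [lra|]. left. apply Rmult_lt_0_compat; [lra|].
        apply Rdiv_lt_0_compat; lra. }
      assert (0 <= wprob b eps N (mm x) k * wprob b eps N (yy x) j) by (apply Rmult_le_pos; lra).
      split; nra.
    + apply is_lim_seq_const.
    + replace (Finite 0) with (Finite (ind0 k * ind0 j)).
      * apply is_lim_seq_mult'; apply wprob_lim; auto.
      * f_equal. unfold ind0. destruct (Nat.eqb_spec k 0); [lia|]. ring.
Qed.

End Main.


Lemma min_inv (u : R) : 0 < u -> Rmin 1 (/ u) = / Rmax 1 u.
Proof.
  intros Hu. unfold Rmin, Rmax.
  destruct (Rle_dec 1 (/ u)); destruct (Rle_dec 1 u).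
  - assert (u = 1). { destruct r0; [|auto]. apply Rinv_lt_contravar in H; [|lra]. rewrite Rinv_1 in H.
      lra. } subst. rewrite Rinv_1. reflexivity.
  - rewrite Rinv_1. reflexivity. 
  - reflexivity.
  - exfalso. apply n. rewrite <- Rinv_1. apply Rinv_le_contravar; lra.
Qed.

Theorem proposition3p13
  (theta : R) (b eps : nat -> R) (l : Rbar)
  (Htheta : 0 < theta < 1)
  (Hb : forall m : nat, (1 <= m)%nat -> 1 < b m)
  (Heps : forall m : nat, (1 <= m)%nat -> 0 < eps m <= 1)
  (Hb_lim : is_lim_seq b p_infty)
  (Heps_lim : is_lim_seq eps 0)
  (Hl_pos : Rbar_lt 0 l)
  (Hratio : is_lim_seq (fun m => eps m / eps (S m)) l) :
  forall N : nat, (1 <= N)%nat ->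
    geometrically_ergodic (noisy_kernel theta b eps N).
Proof.
  intros N HN.
  assert (ep : forall x, 0 < eps (S x)) by (intros x; apply Heps; lia).
  assert (Hlam : exists lam, 0 <= lam <= 1 /\ is_lim_seq (fun x => eps (S (S x)) / eps (S x)) lam).
  { apply is_lim_seq_incr_1 in Hratio.
    apply is_lim_seq_inv in Hratio; [|destruct l; simpl in *; try discriminate; intros E; injection E; lra].
    assert (Hr : is_lim_seq (fun x => eps (S (S x)) / eps (S x)) (Rbar_inv l)).
    { apply is_lim_seq_ext with (2 := Hratio). intros x. pose proof (ep x); pose proof (ep (S x)).
      field. split; lra. }
    assert (E : exists lam, Rbar_inv l = Finite lam /\ 0 <= lam).
    { destruct l as [r| |]; simpl in *.
      - exists (/ r). split; [reflexivity|]. left; apply Rinv_0_lt_compat; lra.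
      - exists 0. split; [reflexivity|lra].
      - contradiction. }
    destruct E as [lam [El Hl0]]. rewrite El in Hr. exists lam. split; [split; [exact Hl0|]|exact Hr].
    destruct (Rle_dec lam 1) as [ok|nok]; [exact ok|exfalso].
    assert (pos : 0 < lam - 1) by lra.
    apply is_lim_seq_spec in Hr. destruct (Hr (mkposreal _ pos)) as [X HX]. simpl in HX.
    assert (incr : forall k, eps (S X) <= eps (S (X + k))).
    { induction k. rewrite Nat.add_0_r; lra.
      specialize (HX (X + k)%nat ltac:(lia)). apply Rabs_def2 in HX.
      assert (1 < eps (S (S (X + k))) / eps (S (X + k))) by lra.
      pose proof (ep (X + k)%nat).
      apply Rmult_lt_compat_r with (r := eps (S (X + k))) in H; [|lra].
      unfold Rdiv in H. rewrite Rmult_assoc, Rinv_l, Rmult_1_l, Rmult_1_r in H by lra.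
      replace (X + S k)%nat with (S (X + k)) by lia. lra. }
    pose proof Heps_lim as L. apply is_lim_seq_spec in L.
    destruct (L (mkposreal _ (ep X))) as [M HM]. simpl in HM.
    specialize (HM (S (X + M)) ltac:(lia)). specialize (incr M).
    rewrite Rminus_0_r in HM. rewrite Rabs_pos_eq in HM by (apply Rlt_le, ep). lra. }
  destruct Hlam as [lam [[l0 l1] Hlam]].
  pose proof (kap0_pos theta Htheta) as kp.
  set (kap := kap0 theta) in *.
  assert (sm1 : is_lim_seq (fun x => s_par b eps (S x)) 0).
  { apply s_lim_gen. apply (is_lim_seq_incr_1 b). exact Hb_lim.
    apply (is_lim_seq_incr_1 eps). exact Heps_lim. }
  assert (sm2 : is_lim_seq (fun x => s_par b eps (S (S x))) 0).
  { apply (is_lim_seq_incr_1 (fun x => s_par b eps (S x))). exact sm1. }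
  set (A := theta * Rmin 1 (kap * lam)).
  set (D := (1 - theta) * / Rmax 1 (kap * lam)).
  assert (Lup : is_lim_seq (upK theta b eps N) A).
  { unfold upK, A.
    apply is_lim_seq_ext with (fun x => theta * acc b eps N (S x) (S (S x)) kap).
    { intros x. rewrite (accept_up theta b eps N Htheta). reflexivity. }
    apply is_lim_seq_mult'; [apply is_lim_seq_const|].
    apply (acc_lim b eps N Hb Heps HN (fun x => S x) (fun x => S (S x))); auto; try (intros; lia).
    apply lim_Rmin1. apply is_lim_seq_mult'; [apply is_lim_seq_const|exact Hlam]. }
  assert (Ldn : is_lim_seq (dnK theta b eps N) D).
  { unfold dnK, D.
    apply is_lim_seq_ext with (fun x => (1 - theta) * acc b eps N (S (S x)) (S x) (/ kap)).
    { intros x. rewrite (accept_dn theta b eps N Htheta). reflexivity. }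
    apply is_lim_seq_mult'; [apply is_lim_seq_const|].
    apply (acc_lim b eps N Hb Heps HN (fun x => S (S x)) (fun x => S x)); auto; try (intros; lia).
    - apply Rinv_0_lt_compat; lra.
    - apply is_lim_seq_ext with (fun x => / Rmax 1 (kap * (eps (S (S x)) / eps (S x)))).
      { intros x. rewrite <- min_inv.
        - f_equal. pose proof (ep x); pose proof (ep (S x)). field. split; [|split]; lra.
        - apply Rmult_lt_0_compat; [lra|]. apply Rdiv_lt_0_compat; apply ep. }
      assert (HH := is_lim_seq_inv _ (Finite (Rmax 1 (kap * lam)))
        (lim_Rmax1 _ _ (is_lim_seq_mult' _ _ _ _ (is_lim_seq_const kap) Hlam))).
      simpl in HH. apply HH. intros E. injection E. pose proof (Rmax_l 1 (kap * lam)). lra. }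
  assert (Mx : 1 <= Rmax 1 (kap * lam)) by apply Rmax_l.
  assert (HD : 0 < D) by (unfold D; apply Rmult_lt_0_compat; [lra|apply Rinv_0_lt_compat; lra]).
  assert (HA : 0 <= A <= D / 2).
  { assert (Eu : 2 * theta * (kap * lam) = (1 - theta) * lam) by (unfold kap, kap0; field; lra).
    assert (u0 : 0 <= kap * lam) by (apply Rmult_le_pos; lra).
    unfold A, D. set (u := kap * lam) in *. unfold Rmin, Rmax.
    destruct (Rle_dec 1 u).
    - split; [lra|].
      replace ((1 - theta) * / u / 2) with (theta + ((1 - theta) - 2 * theta * u) / (2 * u)) by (field; lra).
      assert (0 <= ((1 - theta) - 2 * theta * u) / (2 * u)) by (apply Rdiv_le_0_compat; nra).
      lra.
    - split; [nra|]. rewrite Rinv_1. nra. }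
  apply (BD_geo (noisy_kernel theta b eps N) (upK theta b eps N) (dnK theta b eps N) theta Htheta
           (Kc_up theta b eps N) (Kc_dn theta b eps N) (Kc_st theta b eps N) (Kc_0 theta b eps N)
           (upK_b theta b eps N Htheta Hb Heps HN) (dnK_b theta b eps N Htheta Hb Heps HN)
           A D Lup Ldn HD HA).
Qed.
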